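(* Let $n\in\mathbb{N}$, $1<p<q$, $0<\omega<\omega_{p,q}$, and let $u$ be a positive solution of $$u''(r)+\frac{n-1}{r}u'(r)+f(u(r))=0\ (r>0),\qquad u'(0)=0,\qquad \lim_{r\to\infty}u(r)=0,$$ where $f(u)=-\omega u+u^p-u^q$. Let $B>0$ be the number such that $\Sigma<0$ on $(0,B)$ and $\Sigma>0$ on $(B,C)$ for some $C\in(B,\infty]$, where $\Sigma(u)=2nF(u)-(n-2)uf(u)$ and $F(u)=\int_0^u f(s)\,ds$. Then $$B<\|u\|_\infty=u(0).$$
   Context: $\omega_{p,q}=\frac{2(q-p)}{(p+1)(q-1)}\left[\frac{(p-1)(q+1)}{(p+1)(q-1)}\right]^{\frac{p-1}{q-p}}$; under $0<\omega<\omega_{p,q}$ a positive solution of the boundary value problem exists and is unique. The number $B$ is the smallest positive zero of $\Sigma$; it exists (with the stated sign pattern) under the hypotheses. *)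

(* Defs.v *)
From Stdlib Require Import Reals.
Open Scope R_scope.

(* x^a for real exponent a, used only for x > 0 (x^a := 0 for x <= 0). *)
Definition rpow (x a : R) : R := if Rlt_dec 0 x then Rpower x a else 0.

Definition omega_pq (p q : R) : R :=
  2 * (q - p) / ((p + 1) * (q - 1)) *
  Rpower (((p - 1) * (q + 1)) / ((p + 1) * (q - 1))) ((p - 1) / (q - p)).

Definition fnl (om p q u : R) : R := - om * u + rpow u p - rpow u q.

(* F(u) = int_0^u f(s) ds, written out explicitly (valid for u >= 0) *)
Definition Fnl (om p q u : R) : R :=
  - om * u ^ 2 / 2 + rpow u (p + 1) / (p + 1) - rpow u (q + 1) / (q + 1).

Definition Sigma (n : nat) (om p q u : R) : R :=
  2 * INR n * Fnl om p q u - (INR n - 2) * u * fnl om p q u.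

(* Main.v *)
Require Import Defs.
From Stdlib Require Import Reals Lra Lia.
Open Scope R_scope.

Lemma rpow_pos x a : 0 < x -> rpow x a = Rpower x a.
Proof. intros H; unfold rpow; destruct (Rlt_dec 0 x); [reflexivity|lra]. Qed.

Lemma Rpower_gt0 x a : 0 < Rpower x a.
Proof. unfold Rpower; apply exp_pos. Qed.

Lemma dpl_eq f x l l' : derivable_pt_lim f x l -> l = l' -> derivable_pt_lim f x l'.
Proof. intros H ->; exact H. Qed.

Lemma dpl_plus f g x a b : derivable_pt_lim f x a -> derivable_pt_lim g x b ->
  derivable_pt_lim (fun y => f y + g y) x (a + b).
Proof. intros; exact (derivable_pt_lim_plus f g x a b H H0). Qed.
Lemma dpl_minus f g x a b : derivable_pt_lim f x a -> derivable_pt_lim g x b ->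
  derivable_pt_lim (fun y => f y - g y) x (a - b).
Proof. intros; exact (derivable_pt_lim_minus f g x a b H H0). Qed.
Lemma dpl_mult f g x a b : derivable_pt_lim f x a -> derivable_pt_lim g x b ->
  derivable_pt_lim (fun y => f y * g y) x (a * g x + f x * b).
Proof. intros; exact (derivable_pt_lim_mult f g x a b H H0). Qed.
Lemma dpl_const c x : derivable_pt_lim (fun _ => c) x 0.
Proof. exact (derivable_pt_lim_const c x). Qed.
Lemma dpl_id x : derivable_pt_lim (fun y => y) x 1.
Proof. exact (derivable_pt_lim_id x). Qed.
Lemma dpl_comp f g x a b : derivable_pt_lim f x a -> derivable_pt_lim g (f x) b ->
  derivable_pt_lim (fun y => g (f y)) x (b * a).
Proof. intros; exact (derivable_pt_lim_comp f g x a b H H0). Qed.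
Lemma dpl_pow x k : derivable_pt_lim (fun y => y ^ k) x (INR k * x ^ pred k).
Proof. exact (derivable_pt_lim_pow x k). Qed.

Lemma dpl_rpow x a : 0 < x -> derivable_pt_lim (fun y => rpow y a) x (a * Rpower x (a - 1)).
Proof.
  intros Hx.
  apply (derivable_pt_lim_locally_ext (fun y => Rpower y a) _ x (x/2) (2*x)).
  - lra.
  - intros z Hz; rewrite rpow_pos; [reflexivity|lra].
  - apply derivable_pt_lim_power; exact Hx.
Qed.

Lemma Rpower_p1 x a : 0 < x -> Rpower x (a + 1) = x * Rpower x a.
Proof. intros Hx; rewrite Rpower_plus, Rpower_1 by exact Hx; ring. Qed.

Lemma dFnl om p q x : 1 < p -> p < q -> 0 < x ->
  derivable_pt_lim (Fnl om p q) x (fnl om p q x).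
Proof.
  intros Hp Hq Hx. unfold Fnl.
  eapply dpl_eq.
  { apply dpl_minus; [apply dpl_plus|].
    - apply dpl_mult; [apply dpl_mult|]; [apply dpl_const| apply dpl_pow | apply dpl_const].
    - apply dpl_mult; [apply dpl_rpow; exact Hx| apply dpl_const].
    - apply dpl_mult; [apply dpl_rpow; exact Hx| apply dpl_const]. }
  unfold fnl. rewrite !rpow_pos by exact Hx.
  replace (p + 1 - 1) with p by ring. replace (q + 1 - 1) with q by ring.
  simpl. assert (p + 1 <> 0) by lra. assert (q + 1 <> 0) by lra.
  rewrite !Rmult_0_r, !Rmult_0_l, !Rplus_0_r, !Rmult_1_r.
  replace ((p + 1) * Rpower x p * / (p + 1)) with (Rpower x p) by (field; lra).
  replace ((q + 1) * Rpower x q * / (q + 1)) with (Rpower x q) by (field; lra).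
  lra.
Qed.

Lemma dfnl om p q x : 1 < p -> p < q -> 0 < x ->
  derivable_pt_lim (fnl om p q) x (- om + p * Rpower x (p-1) - q * Rpower x (q-1)).
Proof.
  intros Hp Hq Hx. unfold fnl.
  eapply dpl_eq.
  { apply dpl_minus; [apply dpl_plus|].
    - apply dpl_mult; [apply dpl_const| apply dpl_id].
    - apply dpl_rpow; exact Hx.
    - apply dpl_rpow; exact Hx. }
  simpl; ring.
Qed.

Lemma cont_fnl om p q x : 1 < p -> p < q -> 0 < x -> continuity_pt (fnl om p q) x.
Proof. intros. apply derivable_continuous_pt. exists (- om + p * Rpower x (p-1) - q * Rpower x (q-1)). apply dfnl; auto. Qed.
Lemma cont_Fnl om p q x : 1 < p -> p < q -> 0 < x -> continuity_pt (Fnl om p q) x.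
Proof. intros. apply derivable_continuous_pt. exists (fnl om p q x). apply dFnl; auto. Qed.

Lemma Rpower_le1 x a : 0 < x <= 1 -> 0 <= a -> Rpower x a <= 1.
Proof.
  intros Hx Ha. assert (E : Rpower 1 a = 1).
  { unfold Rpower; rewrite ln_1, Rmult_0_r, exp_0; reflexivity. }
  rewrite <- E. apply Rle_Rpower_l; lra.
Qed.

Lemma rpow_sq x a : 0 < x -> rpow x (a + 1) = x ^ 2 * Rpower x (a - 1).
Proof.
  intros Hx. rewrite rpow_pos by exact Hx.
  replace (a + 1) with ((a - 1) + 1 + 1) by ring.
  rewrite !Rpower_p1 by exact Hx. ring.
Qed.

Lemma Fnl_bound om p q x : 1 < p -> p < q -> 0 < om -> 0 < x <= 1 ->
  Rabs (Fnl om p q x) <= (om/2 + 2) * x ^ 2.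
Proof.
  intros Hp Hq Hom Hx. unfold Fnl.
  rewrite (rpow_sq x p), (rpow_sq x q) by lra.
  assert (H1 := Rpower_le1 x (p-1) Hx ltac:(lra)).
  assert (H2 := Rpower_le1 x (q-1) Hx ltac:(lra)).
  assert (H3 := Rpower_gt0 x (p-1)). assert (H4 := Rpower_gt0 x (q-1)).
  assert (Hx2 : 0 < x ^ 2) by (apply pow_lt; lra).
  assert (A : 0 <= x ^ 2 * Rpower x (p - 1) / (p + 1) <= x ^ 2).
  { split. apply Rmult_le_pos; [apply Rmult_le_pos|]; try lra. left; apply Rinv_0_lt_compat; lra.
    apply Rle_trans with (x^2 * Rpower x (p-1)).
    - unfold Rdiv. rewrite <- (Rmult_1_r (x ^ 2 * Rpower x (p - 1))) at 2.
      apply Rmult_le_compat_l. apply Rmult_le_pos; lra.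
      rewrite <- Rinv_1. apply Rinv_le_contravar; lra.
    - rewrite <- (Rmult_1_r (x^2)) at 2. apply Rmult_le_compat_l; lra. }
  assert (B : 0 <= x ^ 2 * Rpower x (q - 1) / (q + 1) <= x ^ 2).
  { split. apply Rmult_le_pos; [apply Rmult_le_pos|]; try lra. left; apply Rinv_0_lt_compat; lra.
    apply Rle_trans with (x^2 * Rpower x (q-1)).
    - unfold Rdiv. rewrite <- (Rmult_1_r (x ^ 2 * Rpower x (q - 1))) at 2.
      apply Rmult_le_compat_l. apply Rmult_le_pos; lra.
      rewrite <- Rinv_1. apply Rinv_le_contravar; lra.
    - rewrite <- (Rmult_1_r (x^2)) at 2. apply Rmult_le_compat_l; lra. }
  assert (C : 0 <= om * x ^ 2) by (apply Rmult_le_pos; lra).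
  unfold Rabs; destruct (Rcase_abs _); lra.
Qed.

Lemma Fnl_upper om p q x : 1 < p -> p < q -> 0 < x ->
  Fnl om p q x <= - om * x ^ 2 / 2 + x ^ 2 * Rpower x (p - 1).
Proof.
  intros Hp Hq Hx. unfold Fnl.
  rewrite (rpow_sq x p), (rpow_sq x q) by lra.
  assert (H3 := Rpower_gt0 x (p-1)). assert (H4 := Rpower_gt0 x (q-1)).
  assert (Hx2 : 0 < x ^ 2) by (apply pow_lt; lra).
  assert (A : x ^ 2 * Rpower x (p - 1) / (p + 1) <= x ^ 2 * Rpower x (p-1)).
  { unfold Rdiv. rewrite <- (Rmult_1_r (x ^ 2 * Rpower x (p - 1))) at 2.
      apply Rmult_le_compat_l. apply Rmult_le_pos; lra.
      rewrite <- Rinv_1. apply Rinv_le_contravar; lra. }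
  assert (B : 0 <= x ^ 2 * Rpower x (q - 1) / (q + 1)).
  { apply Rmult_le_pos; [apply Rmult_le_pos|]; try lra. left; apply Rinv_0_lt_compat; lra. }
  lra.
Qed.

Lemma fnl_bound om p q x K : 1 < p -> p < q -> 0 < om -> 0 < x <= K ->
  Rabs (fnl om p q x) <= om * K + Rpower K p + Rpower K q.
Proof.
  intros Hp Hq Hom Hx. unfold fnl. rewrite !rpow_pos by lra.
  assert (A := Rle_Rpower_l x K p ltac:(lra) Hx).
  assert (B := Rle_Rpower_l x K q ltac:(lra) Hx).
  assert (C := Rpower_gt0 x p). assert (D := Rpower_gt0 x q).
  assert (E : om * x <= om * K) by (apply Rmult_le_compat_l; lra).
  assert (E' : 0 <= om * x) by (apply Rmult_le_pos; lra).
  unfold Rabs; destruct (Rcase_abs _); lra.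
Qed.

Definition gg om p q x := - om + Rpower x (p - 1) - Rpower x (q - 1).

Lemma fnl_gg om p q x : 0 < x -> fnl om p q x = x * gg om p q x.
Proof.
  intros Hx. unfold fnl, gg. rewrite !rpow_pos by exact Hx.
  replace p with ((p - 1) + 1) at 1 by ring. replace q with ((q - 1) + 1) at 1 by ring.
  rewrite !Rpower_p1 by exact Hx. ring.
Qed.

Lemma dgg om p q x : 0 < x -> derivable_pt_lim (gg om p q) x
   (Rpower x (p - 2) * ((p - 1) - (q - 1) * Rpower x (q - p))).
Proof.
  intros Hx. unfold gg.
  eapply dpl_eq.
  { apply dpl_minus; [apply dpl_plus|].
    - apply dpl_const.
    - apply derivable_pt_lim_power; exact Hx.
    - apply derivable_pt_lim_power; exact Hx. }
  replace (q - 1 - 1) with ((p - 2) + (q - p)) by ring.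
  replace (p - 1 - 1) with (p - 2) by ring.
  rewrite Rpower_plus. ring.
Qed.

Lemma gg_qc om p q v w M : 1 < p -> p < q -> 0 < v -> v < w -> w < M ->
  Rmin (gg om p q v) (gg om p q M) < gg om p q w.
Proof.
  intros Hp Hq Hv Hvw HwM.
  destruct (Rlt_dec (Rmin (gg om p q v) (gg om p q M)) (gg om p q w)) as [H|H]; [exact H|].
  exfalso. apply Rnot_lt_le in H.
  assert (H1 : gg om p q w <= gg om p q v).
  { apply Rle_trans with (1 := H). apply Rmin_l. }
  assert (H2 : gg om p q w <= gg om p q M).
  { apply Rle_trans with (1 := H). apply Rmin_r. }
  destruct (MVT_cor2 (gg om p q) (fun x => Rpower x (p - 2) * ((p - 1) - (q - 1) * Rpower x (q - p))) v w Hvw)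
    as [x1 [E1 I1]].
  { intros c Hc. apply dgg. lra. }
  destruct (MVT_cor2 (gg om p q) (fun x => Rpower x (p - 2) * ((p - 1) - (q - 1) * Rpower x (q - p))) w M HwM)
    as [x2 [E2 I2]].
  { intros c Hc. apply dgg. lra. }
  assert (P1 := Rpower_gt0 x1 (p-2)). assert (P2 := Rpower_gt0 x2 (p-2)).
  assert (L : Rpower x1 (q - p) < Rpower x2 (q - p)) by (apply Rlt_Rpower_l; lra).
  assert (S1 : (p - 1) - (q - 1) * Rpower x1 (q - p) <= 0).
  { destruct (Rle_dec ((p - 1) - (q - 1) * Rpower x1 (q - p)) 0) as [h|h]; [exact h|].
    apply Rnot_le_lt in h. exfalso.
    assert (0 < Rpower x1 (p - 2) * ((p - 1) - (q - 1) * Rpower x1 (q - p)) * (w - v))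
      by (apply Rmult_lt_0_compat; [apply Rmult_lt_0_compat|]; lra).
    lra. }
  assert (S2 : 0 <= (p - 1) - (q - 1) * Rpower x2 (q - p)).
  { destruct (Rle_dec 0 ((p - 1) - (q - 1) * Rpower x2 (q - p))) as [h|h]; [exact h|].
    apply Rnot_le_lt in h. exfalso.
    assert (0 < Rpower x2 (p - 2) * (- ((p - 1) - (q - 1) * Rpower x2 (q - p))) * (M - w))
      by (apply Rmult_lt_0_compat; [apply Rmult_lt_0_compat|]; lra).
    lra. }
  assert ((q - 1) * Rpower x1 (q - p) < (q - 1) * Rpower x2 (q - p))
    by (apply Rmult_lt_compat_l; lra).
  lra.
Qed.

Lemma Rdiv_le_0_compat' a b : 0 <= a -> 0 < b -> 0 <= a / b.
Proof. intros; unfold Rdiv; apply Rmult_le_pos; [lra| left; apply Rinv_0_lt_compat; lra]. Qed.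

Lemma exp_pow_INR k x : exp (INR k * x) = exp x ^ k.
Proof.
  induction k as [|k IH]; simpl.
  - rewrite Rmult_0_l; apply exp_0.
  - rewrite <- IH. rewrite <- exp_plus. f_equal. destruct k; simpl; ring.
Qed.

Lemma exp_beats a j K R0 : 0 < a -> exists r, R0 < r /\ 0 < r /\ K * r ^ j < exp (a * r).
Proof.
  intros Ha.
  set (N := INR (S j)).
  assert (HN : 0 < N) by (apply lt_0_INR; lia).
  set (b := (a / N) ^ (S j)).
  assert (Hb : 0 < b) by (apply pow_lt; apply Rdiv_lt_0_compat; lra).
  set (r := Rmax R0 0 + 1 + Rabs K / b).
  assert (HK : 0 <= Rabs K / b) by (apply Rdiv_le_0_compat'; [apply Rabs_pos|lra]).
  assert (Hr0 : 0 < r) by (unfold r; generalize (Rmax_r R0 0); lra).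
  exists r. split; [unfold r; generalize (Rmax_l R0 0); lra|]. split; [exact Hr0|].
  assert (E : exp (a * r) = exp (a * r / N) ^ (S j)).
  { rewrite <- exp_pow_INR. f_equal. unfold N. field. apply not_0_INR; lia. }
  assert (X : a * r / N <= exp (a * r / N)) by (generalize (exp_ineq1_le (a * r / N)); lra).
  assert (Y : (a * r / N) ^ (S j) <= exp (a * r / N) ^ (S j)).
  { apply pow_incr. split; [|exact X]. apply Rdiv_le_0_compat'; [apply Rmult_le_pos|]; lra. }
  assert (Z : (a * r / N) ^ (S j) = b * r * r ^ j).
  { unfold b. replace (a * r / N) with (a / N * r) by (field; lra). rewrite Rpow_mult_distr.
    simpl; ring. }
  assert (W : K < b * r).
  { apply Rle_lt_trans with (Rabs K). apply Rle_abs.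
    unfold r. replace (b * (Rmax R0 0 + 1 + Rabs K / b)) with (b * (Rmax R0 0 + 1) + Rabs K) by (field; lra).
    assert (0 < b * (Rmax R0 0 + 1)) by (apply Rmult_lt_0_compat; [lra| generalize (Rmax_r R0 0); lra]).
    lra. }
  assert (Hrj : 0 < r ^ j) by (apply pow_lt; lra).
  assert (K * r ^ j < b * r * r ^ j) by (apply Rmult_lt_compat_r; lra).
  rewrite E. lra.
Qed.

Lemma pow_pred_r m r : 0 < r -> INR m * r ^ pred m * r = INR m * r ^ m.
Proof. intros. destruct m; simpl; ring. Qed.

Lemma abs_le_of a b : - b <= a <= b -> Rabs a <= b.
Proof. intros; unfold Rabs; destruct (Rcase_abs a); lra. Qed.
Lemma abs_le_to a b : Rabs a <= b -> - b <= a <= b.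
Proof. intros; unfold Rabs in *; destruct (Rcase_abs a); lra. Qed.

Lemma mono_dec g g' s r : s < r -> (forall x, s <= x <= r -> derivable_pt_lim g x (g' x)) ->
  (forall x, s <= x <= r -> g' x <= 0) -> g r <= g s.
Proof.
  intros Hsr Hd Hg. destruct (MVT_cor2 g g' s r Hsr Hd) as [c [E I]].
  assert (g' c * (r - s) <= 0).
  { assert (0 <= - g' c * (r - s)) by (apply Rmult_le_pos; [assert (g' c <= 0) by (apply Hg; lra); lra | lra]). lra. }
  lra.
Qed.

Lemma cont_eps f x : continuity_pt f x -> forall eps, 0 < eps ->
  exists a, 0 < a /\ forall y, Rabs (y - x) < a -> Rabs (f y - f x) < eps.
Proof.
  intros Hc eps He. destruct (Hc eps He) as [a [Ha H]]. exists a; split; [exact Ha|].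
  intros y Hy. destruct (Req_dec y x) as [->|Hne].
  - unfold Rminus; rewrite Rplus_opp_r, Rabs_R0; exact He.
  - apply (H y). split; [split; [exact I| auto]| exact Hy].
Qed.

Lemma cont_Sigma n om p q x : 1 < p -> p < q -> 0 < x -> continuity_pt (Sigma n om p q) x.
Proof.
  intros Hp Hq Hx. apply derivable_continuous_pt. unfold Sigma.
  eexists.
  apply (dpl_minus (fun y => 2 * INR n * Fnl om p q y) (fun y => (INR n - 2) * y * fnl om p q y)).
  - apply (dpl_mult (fun _ => 2 * INR n) (Fnl om p q)); [apply dpl_const| apply dFnl; auto].
  - apply (dpl_mult (fun y => (INR n - 2) * y) (fnl om p q)); [| apply dfnl; auto].
    apply (dpl_mult (fun _ => INR n - 2) (fun y => y)); [apply dpl_const| apply dpl_id].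
Qed.

Theorem theorem2 (n : nat) (p q om : R) (u du d2u : R -> R) (B : R) :
  (1 <= n)%nat ->
  1 < p -> p < q ->
  0 < om -> om < omega_pq p q ->
  (forall r, 0 <= r -> 0 < u r) ->
  (forall r, 0 < r -> derivable_pt_lim u r (du r)) ->
  (forall r, 0 < r -> derivable_pt_lim du r (d2u r)) ->
  (forall r, 0 < r -> d2u r + (INR n - 1) / r * du r + fnl om p q (u r) = 0) ->
  (forall eps, 0 < eps -> exists delta, 0 < delta /\
      forall h, 0 < h < delta -> Rabs ((u h - u 0) / h) < eps) ->
  (forall eps, 0 < eps -> exists M, forall r, M < r -> Rabs (u r) < eps) ->
  0 < B ->
  (forall s, 0 < s < B -> Sigma n om p q s < 0) ->
  (exists C, B < C /\ forall s, B < s < C -> 0 < Sigma n om p q s) ->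
  is_lub (fun y => exists r, 0 <= r /\ y = Rabs (u r)) (u 0) /\ B < u 0.
Proof.
  intros Hn Hp Hpq Hom _ Hpos Hdu Hd2u Hode Hu0 Hinf HB HSneg _.
  destruct n as [|m]; [lia|]. clear Hn.
  assert (Hode' : forall r, 0 < r -> d2u r = - (INR m / r) * du r - fnl om p q (u r)).
  { intros r Hr. specialize (Hode r Hr). rewrite S_INR in Hode.
    replace (INR m + 1 - 1) with (INR m) in Hode by ring. lra. }
  clear Hode.
  assert (Hu00 : 0 < u 0) by (apply Hpos; lra).
  assert (RC : forall eps, 0 < eps -> exists d, 0 < d /\
             forall h, 0 < h < d -> Rabs (u h - u 0) <= eps * h).
  { intros eps He. destruct (Hu0 eps He) as [d [Hd Hh]]. exists d; split; [exact Hd|].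
    intros h Hh'. specialize (Hh h Hh').
    replace (u h - u 0) with ((u h - u 0) / h * h) by (field; lra).
    rewrite Rabs_mult, (Rabs_pos_eq h) by lra.
    apply Rmult_le_compat_r; lra. }
  destruct (RC 1 ltac:(lra)) as [d0 [Hd0 Hd0h]].
  set (d1 := Rmin d0 1).
  assert (Hd1 : 0 < d1) by (apply Rmin_glb_lt; lra).
  assert (Hd1a : d1 <= d0) by apply Rmin_l.
  assert (Hd1b : d1 <= 1) by apply Rmin_r.
  assert (UB : forall h, 0 < h < d1 -> 0 < u h <= u 0 + 1).
  { intros h Hh. split; [apply Hpos; lra|].
    assert (X := Hd0h h ltac:(lra)). apply abs_le_to in X. lra. }
  set (Kf := om * (u 0 + 1) + Rpower (u 0 + 1) p + Rpower (u 0 + 1) q).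
  assert (FB : forall h, 0 < h < d1 -> Rabs (fnl om p q (u h)) <= Kf).
  { intros h Hh. apply fnl_bound; auto. }
  assert (HKf : 0 <= Kf).
  { apply Rle_trans with (Rabs (fnl om p q (u (d1/2)))); [apply Rabs_pos|]. apply FB; lra. }
  assert (dw : forall r, 0 < r -> derivable_pt_lim (fun s => s ^ m * du s) r (- r ^ m * fnl om p q (u r))).
  { intros r Hr. eapply dpl_eq.
    { apply dpl_mult; [apply dpl_pow| apply Hd2u; exact Hr]. }
    rewrite Hode' by exact Hr.
    assert (X := pow_pred_r m r Hr).
    replace (INR m * r ^ pred m) with (INR m * r ^ m / r) by (field_simplify; [rewrite <- X; field|]; lra).
    field. lra. }
  assert (DU : forall r, 0 < r < d1 -> Rabs (du r) <= Kf * r).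
  { intros r Hr.
    assert (Hrm : 0 < r ^ m) by (apply pow_lt; lra).
    assert (W : Rabs (r ^ m * du r) <= Kf * r ^ m * r).
    { apply Rle_plus_epsilon. intros eps Heps.
      destruct (RC (eps / 3) ltac:(lra)) as [de [Hde Hdeh]].
      set (h := Rmin de r / 2).
      assert (Hh : 0 < h /\ h < de /\ h < r).
      { unfold h. assert (0 < Rmin de r) by (apply Rmin_glb_lt; lra).
        generalize (Rmin_l de r) (Rmin_r de r); lra. }
      set (eta := h / 2).
      assert (A1 := Hdeh h ltac:(lra)). assert (A2 := Hdeh eta ltac:(unfold eta; lra)).
      apply abs_le_to in A1. apply abs_le_to in A2.
      destruct (MVT_cor2 u du eta h ltac:(unfold eta; lra)) as [xi [E I]].
      { intros c Hc. apply Hdu. unfold eta in Hc; lra. }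
      assert (Hxi : Rabs (du xi) <= eps).
      { apply abs_le_of. unfold eta in *. split; nra. }
      assert (Hxi1 : 0 <= xi ^ m <= 1).
      { split. apply pow_le; unfold eta in *; lra.
        rewrite <- (pow1 m). apply pow_incr. unfold eta in *; lra. }
      assert (Wxi : Rabs (xi ^ m * du xi) <= eps).
      { rewrite Rabs_mult, (Rabs_pos_eq (xi ^ m)) by lra.
        apply Rle_trans with (1 * eps); [|lra].
        apply Rmult_le_compat; try lra. apply Rabs_pos. }
      destruct (MVT_cor2 (fun s => s ^ m * du s) (fun s => - s ^ m * fnl om p q (u s)) xi r ltac:(unfold eta in *; lra))
        as [ze [E2 I2]].
      { intros c Hc. apply dw. unfold eta in *; lra. }
      assert (Hze : 0 <= ze ^ m <= r ^ m).
      { split. apply pow_le; unfold eta in *; lra. apply pow_incr. unfold eta in *; lra. }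
      assert (Fze : Rabs (fnl om p q (u ze)) <= Kf) by (apply FB; unfold eta in *; lra).
      assert (Y : Rabs (- ze ^ m * fnl om p q (u ze) * (r - xi)) <= r ^ m * Kf * r).
      { rewrite !Rabs_mult, Rabs_Ropp, (Rabs_pos_eq (ze ^ m)), (Rabs_pos_eq (r - xi)) by (unfold eta in *; lra).
        apply Rmult_le_compat; try (unfold eta in *; lra).
        apply Rmult_le_pos; [lra| apply Rabs_pos].
        apply Rmult_le_compat; try lra. apply Rabs_pos. }
      replace (r ^ m * du r) with ((xi ^ m * du xi) + (- ze ^ m * fnl om p q (u ze) * (r - xi))) by lra.
      apply Rle_trans with (1 := Rabs_triang _ _). lra. }
    rewrite Rabs_mult, (Rabs_pos_eq (r ^ m)) in W by lra.
    apply Rmult_le_reg_l with (r ^ m); [exact Hrm|]. lra. }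
  set (E := fun s => du s ^ 2 / 2 + Fnl om p q (u s)).
  assert (dE : forall r, 0 < r -> derivable_pt_lim E r (- (INR m / r) * du r ^ 2)).
  { intros r Hr. unfold E. eapply dpl_eq.
    { apply (dpl_plus (fun s => du s ^ 2 / 2) (fun s => Fnl om p q (u s))).
      - apply (dpl_mult (fun s => du s ^ 2) (fun _ => / 2)); [|apply dpl_const].
        apply (dpl_comp du (fun y => y ^ 2)); [apply Hd2u; exact Hr| apply dpl_pow].
      - apply (dpl_comp u (Fnl om p q)); [apply Hdu; exact Hr| apply dFnl; auto; apply Hpos; lra]. }
    rewrite Hode' by exact Hr. simpl. field. lra. }
  assert (Emono : forall s r, 0 < s < r -> E r <= E s).
  { intros s r Hsr. apply mono_dec with (g' := fun x => - (INR m / x) * du x ^ 2); [lra| |].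
    - intros x Hx. apply dE. lra.
    - intros x Hx. assert (0 <= INR m / x) by (apply Rdiv_le_0_compat'; [apply pos_INR|lra]).
      assert (0 <= du x ^ 2) by (apply pow2_ge_0). nra. }
  assert (Ele : forall r, 0 < r -> E r <= Fnl om p q (u 0)).
  { intros r Hr. destruct (Rle_dec (E r) (Fnl om p q (u 0))) as [h|h]; [exact h|]. exfalso.
    apply Rnot_le_lt in h. set (g := E r - Fnl om p q (u 0)).
    destruct (cont_eps _ _ (cont_Fnl om p q (u 0) Hp Hpq Hu00) (g / 2) ltac:(unfold g; lra)) as [al [Hal Hal2]].
    assert (HK2 : 0 <= Kf ^ 2) by apply pow2_ge_0.
    set (s := Rmin (Rmin (d1 / 2) (r / 2)) (Rmin (al / 2) (g / (Kf ^ 2 + 1)))).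
    assert (Hg1 : 0 < g / (Kf ^ 2 + 1)) by (apply Rdiv_lt_0_compat; unfold g; lra).
    assert (Hs : 0 < s /\ s <= d1 / 2 /\ s <= r / 2 /\ s <= al / 2 /\ s <= g / (Kf ^ 2 + 1)).
    { unfold s. repeat split.
      - repeat apply Rmin_glb_lt; lra.
      - eapply Rle_trans; [apply Rmin_l|]. apply Rmin_l.
      - eapply Rle_trans; [apply Rmin_l|]. apply Rmin_r.
      - eapply Rle_trans; [apply Rmin_r|]. apply Rmin_l.
      - eapply Rle_trans; [apply Rmin_r|]. apply Rmin_r. }
    assert (U1 := Hd0h s ltac:(lra)).
    assert (F1 : Rabs (Fnl om p q (u s) - Fnl om p q (u 0)) < g / 2).
    { apply Hal2. apply Rle_lt_trans with (1 * s); [exact U1| lra]. }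
    apply abs_le_to in U1. apply Rabs_def2 in F1.
    assert (D1 := DU s ltac:(lra)). apply abs_le_to in D1.
    assert (Q : du s ^ 2 <= Kf ^ 2 * s * s) by nra.
    assert (Q2 : Kf ^ 2 * s <= Kf ^ 2 * (g / (Kf ^ 2 + 1))) by (apply Rmult_le_compat_l; lra).
    assert (Q3 : Kf ^ 2 * (g / (Kf ^ 2 + 1)) < g).
    { replace (Kf ^ 2 * (g / (Kf ^ 2 + 1))) with (g - g / (Kf ^ 2 + 1)) by (field; lra). lra. }
    assert (Q4 : Kf ^ 2 * s * s <= Kf ^ 2 * s) by (assert (0 <= Kf ^ 2 * s) by nra; nra).
    assert (M := Emono s r ltac:(lra)). unfold E in M. unfold g, E in *. lra. }
  assert (Cf : 0 < om / 2 + 2) by lra.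
  assert (Ege : forall r, 0 < r -> 0 <= E r).
  { intros r Hr. destruct (Rle_dec 0 (E r)) as [h|h]; [exact h|]. exfalso.
    apply Rnot_le_lt in h.
    assert (Hc : 0 < - E r / (2 * (om / 2 + 2))) by (apply Rdiv_lt_0_compat; lra).
    destruct (Hinf (Rmin 1 (- E r / (2 * (om / 2 + 2)))) ltac:(apply Rmin_glb_lt; lra)) as [M HM].
    set (t := Rmax M r + 1).
    assert (Ht : M < t /\ r < t) by (unfold t; generalize (Rmax_l M r) (Rmax_r M r); lra).
    assert (X := HM t ltac:(lra)).
    assert (Xt : 0 < u t) by (apply Hpos; lra).
    rewrite Rabs_pos_eq in X by lra.
    assert (X1 : u t < 1) by (generalize (Rmin_l 1 (- E r / (2 * (om / 2 + 2)))); lra).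
    assert (X2 : u t < - E r / (2 * (om / 2 + 2))) by (generalize (Rmin_r 1 (- E r / (2 * (om / 2 + 2)))); lra).
    assert (Fb := Fnl_bound om p q (u t) Hp Hpq Hom ltac:(lra)). apply abs_le_to in Fb.
    assert (Y : (om / 2 + 2) * u t ^ 2 <= (om / 2 + 2) * u t) by (apply Rmult_le_compat_l; nra).
    assert (Y2 : (om / 2 + 2) * u t < - E r / 2).
    { replace (- E r / 2) with ((om / 2 + 2) * (- E r / (2 * (om / 2 + 2)))) by (field; lra).
      apply Rmult_lt_compat_l; lra. }
    assert (M2 := Emono r t ltac:(lra)).
    assert (0 <= du t ^ 2) by apply pow2_ge_0.
    unfold E in *. lra. }
  assert (Sup : forall r, 0 <= r -> u r <= u 0).
  { intros r1 Hr1. destruct (Rle_dec (u r1) (u 0)) as [h|h]; [exact h|]. exfalso.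
    apply Rnot_le_lt in h.
    assert (Hr1p : 0 < r1) by (destruct Hr1 as [Hr1|Hr1]; [exact Hr1| subst r1; lra]).
    destruct (Hinf (u r1) ltac:(apply Hpos; lra)) as [M HM].
    set (RR := Rmax M r1 + 1).
    assert (HR : M < RR /\ r1 < RR) by (unfold RR; generalize (Rmax_l M r1) (Rmax_r M r1); lra).
    set (de := Rmin (Rmin d0 (u r1 - u 0)) r1 / 2).
    assert (Hde : 0 < de /\ de < d0 /\ de < u r1 - u 0 /\ de <= r1 / 2).
    { unfold de. assert (0 < Rmin (Rmin d0 (u r1 - u 0)) r1) by (repeat apply Rmin_glb_lt; lra).
      generalize (Rmin_l (Rmin d0 (u r1 - u 0)) r1) (Rmin_r (Rmin d0 (u r1 - u 0)) r1)
        (Rmin_l d0 (u r1 - u 0)) (Rmin_r d0 (u r1 - u 0)). lra. }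
    destruct (continuity_ab_maj u de RR ltac:(lra)) as [rs [Hmax Hrs]].
    { intros c Hc. apply derivable_continuous_pt. exists (du c). apply Hdu. lra. }
    assert (G : forall x, 0 < x -> u x <= u rs).
    { intros x Hx. assert (Hr1rs := Hmax r1 ltac:(lra)).
      destruct (Rle_dec x de) as [h1|h1].
      - assert (X := Hd0h x ltac:(lra)). apply abs_le_to in X. lra.
      - destruct (Rle_dec x RR) as [h2|h2].
        + apply Hmax; lra.
        + assert (X := HM x ltac:(lra)). apply Rabs_def2 in X. lra. }
    assert (Hrs0 : 0 < rs) by lra.
    assert (Dz : du rs = 0).
    { assert (X := deriv_maximum u 0 (rs + 1) rs (exist _ (du rs) (Hdu rs Hrs0)) Hrs0 ltac:(lra)
                     ltac:(intros x Hx1 Hx2; apply G; exact Hx1)).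
      unfold derive_pt in X; simpl in X; exact X. }
    assert (D2 : d2u rs <= 0).
    { destruct (Rle_dec (d2u rs) 0) as [h1|h1]; [exact h1|]. exfalso. apply Rnot_le_lt in h1.
      destruct (Hd2u rs Hrs0 (d2u rs / 2) ltac:(lra)) as [dl Hdl].
      assert (Pos : forall h, 0 < h < dl -> 0 < du (rs + h)).
      { intros hh Hhh. assert (X := Hdl hh ltac:(lra) ltac:(rewrite Rabs_pos_eq; lra)).
        apply Rabs_def2 in X. rewrite Dz in X.
        assert (0 < (du (rs + hh) - 0) / hh) by lra.
        replace (du (rs + hh)) with ((du (rs + hh) - 0) / hh * hh) by (field; lra).
        apply Rmult_lt_0_compat; lra. }
      assert (Hdl0 := cond_pos dl).
      destruct (MVT_cor2 u du rs (rs + dl / 2) ltac:(lra)) as [xi [Ex Ix]].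
      { intros c Hc. apply Hdu. lra. }
      assert (0 < du xi).
      { replace xi with (rs + (xi - rs)) by ring. apply Pos. lra. }
      assert (0 < du xi * (rs + dl / 2 - rs)) by (apply Rmult_lt_0_compat; lra).
      assert (G2 := G (rs + dl / 2) ltac:(lra)). lra. }
    assert (fM : 0 <= fnl om p q (u rs)).
    { assert (X := Hode' rs Hrs0). rewrite Dz in X. lra. }
    set (Mx := u rs). assert (HMx : 0 < Mx) by (apply Hpos; lra).
    assert (HMu : u 0 < Mx) by (assert (X := Hmax r1 ltac:(lra)); unfold Mx; lra).
    assert (EF : E rs = Fnl om p q Mx). { unfold E, Mx. cbv beta. rewrite Dz. clear -Dz. simpl. unfold Rdiv. rewrite !Rmult_0_l, Rplus_0_l. reflexivity. }
    assert (FM1 : Fnl om p q Mx <= Fnl om p q (u 0)) by (rewrite <- EF; apply Ele; exact Hrs0).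
    assert (FM2 : 0 <= Fnl om p q Mx) by (rewrite <- EF; apply Ege; exact Hrs0).
    rewrite fnl_gg in fM by exact HMx. fold Mx in fM.
    assert (gM : 0 <= gg om p q Mx).
    { destruct (Rle_dec 0 (gg om p q Mx)) as [h1|h1]; [exact h1|]. exfalso. nra. }
    destruct (Rle_dec 0 (gg om p q (u 0))) as [g0|g0].
    - destruct (MVT_cor2 (Fnl om p q) (fnl om p q) (u 0) Mx HMu) as [xi [Ex Ix]].
      { intros c Hc. apply dFnl; auto; lra. }
      rewrite fnl_gg in Ex by lra.
      assert (Q := gg_qc om p q (u 0) xi Mx Hp Hpq Hu00 ltac:(lra) ltac:(lra)).
      assert (0 < gg om p q xi) by (unfold Rmin in Q; destruct (Rle_dec _ _) in Q; lra).
      assert (0 < xi * gg om p q xi * (Mx - u 0))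
        by (apply Rmult_lt_0_compat; [apply Rmult_lt_0_compat|]; lra).
      lra.
    - apply Rnot_le_lt in g0.
      assert (Neg : forall w, 0 < w <= u 0 -> fnl om p q w < 0).
      { intros w Hw. rewrite fnl_gg by lra.
        assert (gw : gg om p q w < 0).
        { destruct (Req_dec w (u 0)) as [->|hw]; [exact g0|].
          assert (Q := gg_qc om p q w (u 0) Mx Hp Hpq ltac:(lra) ltac:(lra) HMu).
          unfold Rmin in Q; destruct (Rle_dec _ _) in Q; lra. }
        assert (0 < w * - gg om p q w) by (apply Rmult_lt_0_compat; lra). lra. }
      assert (F1 : Fnl om p q (u 0) < Fnl om p q (u 0 / 2)).
      { destruct (MVT_cor2 (Fnl om p q) (fnl om p q) (u 0 / 2) (u 0) ltac:(lra)) as [xi [Ex Ix]].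
        { intros c Hc. apply dFnl; auto; lra. }
        assert (X := Neg xi ltac:(lra)).
        assert (0 < - fnl om p q xi * (u 0 - u 0 / 2)) by (apply Rmult_lt_0_compat; lra). lra. }
      assert (F2 : Fnl om p q (u 0 / 2) <= 0).
      { destruct (Rle_dec (Fnl om p q (u 0 / 2)) 0) as [h1|h1]; [exact h1|]. exfalso.
        apply Rnot_le_lt in h1. set (g := Fnl om p q (u 0 / 2)).
        assert (Hg : 0 < g / (2 * (om / 2 + 2))) by (apply Rdiv_lt_0_compat; [exact h1 | lra]).
        set (ep := Rmin (u 0 / 4) (Rmin 1 (g / (2 * (om / 2 + 2))))).
        assert (Hep : 0 < ep /\ ep <= u 0 / 4 /\ ep <= 1 /\ ep <= g / (2 * (om / 2 + 2))).
        { unfold ep. repeat split.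
          - repeat apply Rmin_glb_lt; lra.
          - apply Rmin_l.
          - eapply Rle_trans; [apply Rmin_r|]. apply Rmin_l.
          - eapply Rle_trans; [apply Rmin_r|]. apply Rmin_r. }
        destruct (MVT_cor2 (Fnl om p q) (fnl om p q) ep (u 0 / 2) ltac:(lra)) as [xi [Ex Ix]].
        { intros c Hc. apply dFnl; auto; lra. }
        assert (X := Neg xi ltac:(lra)).
        assert (0 < - fnl om p q xi * (u 0 / 2 - ep)) by (apply Rmult_lt_0_compat; lra).
        assert (Fb := Fnl_bound om p q ep Hp Hpq Hom ltac:(lra)). apply abs_le_to in Fb.
        assert (Y : (om / 2 + 2) * ep ^ 2 <= (om / 2 + 2) * ep) by (apply Rmult_le_compat_l; nra).
        assert (Y2 : (om / 2 + 2) * ep <= g / 2).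
        { replace (g / 2) with ((om / 2 + 2) * (g / (2 * (om / 2 + 2)))) by (field; lra).
          apply Rmult_le_compat_l; lra. }
        unfold g in *. lra. }
      lra. }
  split.
  { split.
    - intros y [r [Hr ->]]. rewrite Rabs_pos_eq by (left; apply Hpos; exact Hr). apply Sup; exact Hr.
    - intros b Hb. apply Hb. exists 0. split; [lra|]. rewrite Rabs_pos_eq; lra. }
  destruct (Rlt_dec B (u 0)) as [hB|hB]; [exact hB|]. exfalso. apply Rnot_lt_le in hB.
  (* Step F: Pohozaev *)
  assert (SigB : Sigma (S m) om p q B <= 0).
  { destruct (Rle_dec (Sigma (S m) om p q B) 0) as [h|h]; [exact h|]. exfalso. apply Rnot_le_lt in h.
    destruct (cont_eps _ _ (cont_Sigma (S m) om p q B Hp Hpq HB) _ h) as [al [Hal Hal2]].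
    set (y := B - Rmin al B / 2).
    assert (Hy : 0 < y < B /\ Rabs (y - B) < al).
    { unfold y. assert (0 < Rmin al B) by (apply Rmin_glb_lt; lra).
      generalize (Rmin_l al B) (Rmin_r al B); intros. split; [lra|].
      rewrite Rabs_left by lra. lra. }
    assert (X := Hal2 y (proj2 Hy)). apply Rabs_def2 in X.
    assert (Y := HSneg y (proj1 Hy)). lra. }
  assert (SigLe : forall r, 0 < r -> Sigma (S m) om p q (u r) <= 0).
  { intros r Hr. assert (X := Sup r ltac:(lra)). assert (Y := Hpos r ltac:(lra)).
    destruct (Req_dec (u r) B) as [->|hne]; [exact SigB|]. left; apply HSneg; lra. }
  set (P := fun r => r ^ m * (r * (du r ^ 2 + 2 * Fnl om p q (u r)) + (INR m - 1) * u r * du r)).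
  assert (dP : forall r, 0 < r -> derivable_pt_lim P r (r ^ m * Sigma (S m) om p q (u r))).
  { intros r Hr. unfold P. eapply dpl_eq.
    { apply (dpl_mult (fun r => r ^ m) (fun r => r * (du r ^ 2 + 2 * Fnl om p q (u r)) + (INR m - 1) * u r * du r));
        [apply dpl_pow|].
      apply (dpl_plus (fun r => r * (du r ^ 2 + 2 * Fnl om p q (u r))) (fun r => (INR m - 1) * u r * du r)).
      - apply (dpl_mult (fun r => r) (fun r => du r ^ 2 + 2 * Fnl om p q (u r))); [apply dpl_id|].
        apply (dpl_plus (fun r => du r ^ 2) (fun r => 2 * Fnl om p q (u r))).
        + apply (dpl_comp du (fun y => y ^ 2)); [apply Hd2u; exact Hr| apply dpl_pow].
        + apply (dpl_mult (fun _ => 2) (fun r => Fnl om p q (u r))); [apply dpl_const|].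
          apply (dpl_comp u (Fnl om p q)); [apply Hdu; exact Hr| apply dFnl; auto; apply Hpos; lra].
      - apply (dpl_mult (fun r => (INR m - 1) * u r) du); [|apply Hd2u; exact Hr].
        apply (dpl_mult (fun _ => INR m - 1) u); [apply dpl_const| apply Hdu; exact Hr]. }
    rewrite Hode' by exact Hr. unfold Sigma. rewrite S_INR.
    assert (X := pow_pred_r m r Hr).
    replace (INR m * r ^ pred m) with (INR m * r ^ m / r) by (field_simplify; [rewrite <- X; field|]; lra).
    rewrite (S_INR m). change (INR 1) with 1. cbn [Init.Nat.pred]. field. lra. }
  assert (Pmono : forall s r, 0 < s < r -> P r <= P s).
  { intros s r Hsr. apply mono_dec with (g' := fun x => x ^ m * Sigma (S m) om p q (u x)); [lra| |].
    - intros x Hx. apply dP. lra.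
    - intros x Hx. assert (0 < x ^ m) by (apply pow_lt; lra). assert (X := SigLe x ltac:(lra)). nra. }
  assert (EE : forall r, 0 < r -> du r ^ 2 + 2 * Fnl om p q (u r) = 2 * E r) by (intros; unfold E; field).
  set (KP := 2 * Fnl om p q (u 0) + Rabs (INR m - 1) * (u 0 + 1) * Kf).
  assert (Ple0 : forall r, 0 < r -> P r <= 0).
  { intros r Hr. apply Rle_plus_epsilon. intros eps Heps. rewrite Rplus_0_l.
    assert (HF0 : 0 <= Fnl om p q (u 0)) by (apply Rle_trans with (E r); [apply Ege|apply Ele]; lra).
    assert (HKP : 0 <= KP).
    { unfold KP. assert (0 <= Rabs (INR m - 1) * (u 0 + 1) * Kf) by
        (apply Rmult_le_pos; [apply Rmult_le_pos; [apply Rabs_pos|lra]|lra]). lra. }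
    set (s := Rmin (Rmin (r / 2) (d1 / 2)) (eps / (KP + 1))).
    assert (Hs : 0 < s /\ s <= r / 2 /\ s <= d1 / 2 /\ s <= eps / (KP + 1)).
    { unfold s. assert (0 < eps / (KP + 1)) by (apply Rdiv_lt_0_compat; lra). repeat split.
      - repeat apply Rmin_glb_lt; lra.
      - eapply Rle_trans; [apply Rmin_l|]. apply Rmin_l.
      - eapply Rle_trans; [apply Rmin_l|]. apply Rmin_r.
      - apply Rmin_r. }
    assert (M := Pmono s r ltac:(lra)).
    assert (Hsm : 0 <= s ^ m <= 1).
    { split. apply pow_le; lra. rewrite <- (pow1 m). apply pow_incr. lra. }
    assert (X1 : s * (du s ^ 2 + 2 * Fnl om p q (u s)) <= s * (2 * Fnl om p q (u 0))).
    { rewrite EE by lra. apply Rmult_le_compat_l; [lra|]. assert (XX := Ele s ltac:(lra)). lra. }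
    assert (X2 : (INR m - 1) * u s * du s <= Rabs (INR m - 1) * (u 0 + 1) * Kf * s).
    { apply Rle_trans with (Rabs ((INR m - 1) * u s * du s)); [apply Rle_abs|].
      rewrite !Rabs_mult. assert (U := UB s ltac:(lra)). rewrite (Rabs_pos_eq (u s)) by lra.
      assert (D := DU s ltac:(lra)).
      rewrite !Rmult_assoc.
      apply Rmult_le_compat_l; [apply Rabs_pos|].
      apply Rmult_le_compat; try lra. apply Rabs_pos. }
    assert (X3 : s * KP <= eps).
    { apply Rle_trans with (eps / (KP + 1) * KP). apply Rmult_le_compat_r; lra.
      replace (eps / (KP + 1) * KP) with (eps - eps / (KP + 1)) by (field; lra).
      assert (0 < eps / (KP + 1)) by (apply Rdiv_lt_0_compat; lra). lra. }
    assert (X4 : P s <= s * KP).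
    { unfold P. set (Z := s * (du s ^ 2 + 2 * Fnl om p q (u s)) + (INR m - 1) * u s * du s).
      assert (Z <= s * KP) by (unfold Z, KP; lra).
      destruct (Rle_dec 0 Z).
      - apply Rle_trans with (1 * Z); [apply Rmult_le_compat_r; lra| lra].
      - assert (0 <= s * KP) by (apply Rmult_le_pos; lra).
        assert (s ^ m * Z <= 0) by (apply Rmult_le_0_r_compat'; lra) || nra. lra. }
    lra. }
  destruct (Hinf B HB) as [M0 HM0].
  set (R2 := Rmax M0 0 + 1). set (R3 := R2 + 1).
  assert (HR2 : M0 < R2 /\ 0 < R2) by (unfold R2; generalize (Rmax_l M0 0) (Rmax_r M0 0); lra).
  assert (PR : P R3 < P R2).
  { destruct (MVT_cor2 P (fun x => x ^ m * Sigma (S m) om p q (u x)) R2 R3 ltac:(unfold R3; lra)) as [xi [Ex Ix]].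
    { intros c Hc. apply dP. unfold R3 in Hc; lra. }
    assert (X := HM0 xi ltac:(lra)). assert (Y := Hpos xi ltac:(lra)).
    rewrite Rabs_pos_eq in X by lra.
    assert (Z := HSneg (u xi) ltac:(lra)).
    assert (0 < xi ^ m) by (apply pow_lt; lra).
    assert (0 < xi ^ m * - Sigma (S m) om p q (u xi) * (R3 - R2)) by
      (apply Rmult_lt_0_compat; [apply Rmult_lt_0_compat|]; unfold R3 in *; lra).
    lra. }
  set (c := P R3).
  assert (Hc : c < 0) by (assert (X := Ple0 R2 ltac:(lra)); unfold c; lra).
  assert (Pc : forall r, R3 <= r -> P r <= c).
  { intros r Hr. destruct (Req_dec r R3) as [->|hne]; [unfold c; lra|]. apply Pmono; unfold R3 in *; lra. }
  assert (Hm : m = 0%nat \/ m = 1%nat \/ (2 <= m)%nat) by lia.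
  destruct Hm as [Hm|[Hm|Hm]].
  -
    assert (UD : forall r, R3 <= r -> - c <= u r * du r).
    { intros r Hr. assert (X := Pc r Hr). unfold P in X. rewrite Hm, pow_O in X.
      rewrite EE in X by (unfold R3 in *; lra). assert (Y := Ege r ltac:(unfold R3 in *; lra)).
      replace (INR 0) with 0 in X by reflexivity.
      assert (0 <= r * (2 * E r)) by (apply Rmult_le_pos; unfold R3 in *; lra). lra. }
    destruct (Hinf 1 ltac:(lra)) as [M1 HM1].
    set (T := Rmax M1 R3 + 1 - 1 / (2 * c)).
    assert (Hc2 : 0 < - (1 / (2 * c))).
    { replace (- (1 / (2 * c))) with (1 / (2 * - c)) by (field; lra). apply Rdiv_lt_0_compat; lra. }
    assert (HT : M1 < T /\ R3 + 1 - 1 / (2 * c) <= T) by (unfold T; generalize (Rmax_l M1 R3) (Rmax_r M1 R3); lra).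
    assert (Mo := mono_dec (fun r => 2 * (- c) * r - u r ^ 2) (fun r => 2 * (- c) - 2 * (u r * du r)) R3 T
                   ltac:(lra)).
    simpl in Mo. lapply Mo; [clear Mo; intro Mo|].
    2:{ intros x Hx. eapply dpl_eq.
        { apply (dpl_minus (fun r => 2 * - c * r) (fun r => u r ^ 2)).
          - apply (dpl_mult (fun _ => 2 * - c) (fun r => r)); [apply dpl_const| apply dpl_id].
          - apply (dpl_comp u (fun y => y ^ 2)); [apply Hdu; unfold R3 in *; lra| apply dpl_pow]. }
        cbn [Init.Nat.pred]. change (INR 2) with (1 + 1). ring. }
    lapply Mo; [clear Mo; intro Mo|].
    2:{ intros x Hx. assert (X := UD x ltac:(lra)). lra. }
    assert (X := HM1 T ltac:(lra)). assert (Y := Hpos T ltac:(unfold R3 in *; lra)).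
    rewrite Rabs_pos_eq in X by lra.
    assert (Z : u T ^ 2 < 1) by nra.
    assert (W : 2 * - c * (T - R3) >= 2 * - c * (1 - 1 / (2 * c))) by (apply Rle_ge; apply Rmult_le_compat_l; lra).
    replace (2 * - c * (1 - 1 / (2 * c))) with (- 2 * c + 1) in W by (field; lra).
    assert (0 <= u R3 ^ 2) by apply pow2_ge_0. lra.
  -
    assert (X := Pc R3 ltac:(lra)). unfold P in X. rewrite Hm in X.
    rewrite EE in X by (unfold R3 in *; lra). assert (Y := Ege R3 ltac:(unfold R3 in *; lra)).
    replace (INR 1) with 1 in X by reflexivity. rewrite pow_1 in X.
    assert (0 <= R3 * (R3 * (2 * E R3))) by (apply Rmult_le_pos; [|apply Rmult_le_pos]; unfold R3 in *; lra).
    lra.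
  -
    assert (Hmm : 1 <= INR m - 1).
    { assert (X := le_INR 2 m Hm). change (INR 2) with (1 + 1) in X. lra. }
    assert (UD : forall r, R3 <= r -> - c <= (INR m - 1) * r ^ m * - (u r * du r)).
    { intros r Hr. assert (X := Pc r Hr). unfold P in X.
      rewrite EE in X by (unfold R3 in *; lra). assert (Y := Ege r ltac:(unfold R3 in *; lra)).
      assert (0 <= r ^ m * (r * (2 * E r))).
      { apply Rmult_le_pos; [apply pow_le|apply Rmult_le_pos]; unfold R3 in *; lra. }
      lra. }
    set (dp := Rpower (om / 4) (/ (p - 1))).
    assert (Hdp : 0 < dp) by apply Rpower_gt0.
    assert (Hdpp : Rpower dp (p - 1) = om / 4).
    { unfold dp. rewrite Rpower_mult. replace (/ (p - 1) * (p - 1)) with 1 by (field; lra).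
      apply Rpower_1. lra. }
    destruct (Hinf (Rmin 1 dp) ltac:(apply Rmin_glb_lt; lra)) as [M4 HM4].
    set (R5 := Rmax M4 R3 + 1).
    assert (HR5 : M4 < R5 /\ R3 < R5) by (unfold R5; generalize (Rmax_l M4 R3) (Rmax_r M4 R3); lra).
    assert (HF0 : 0 <= Fnl om p q (u 0)) by (apply Rle_trans with (E R5); [apply Ege|apply Ele]; unfold R3 in *; lra).
    set (D2 := 2 * Fnl om p q (u 0) + 2 * (om / 2 + 2) + 1).
    assert (Bnd : forall r, R5 <= r -> om / 2 * u r ^ 2 <= du r ^ 2 <= D2 /\ 0 < u r < 1).
    { intros r Hr. assert (X := HM4 r ltac:(lra)). assert (Y := Hpos r ltac:(unfold R3 in *; lra)).
      rewrite Rabs_pos_eq in X by lra.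
      assert (X1 : u r < 1) by (generalize (Rmin_l 1 dp); lra).
      assert (X2 : u r < dp) by (generalize (Rmin_r 1 dp); lra).
      assert (Z : Rpower (u r) (p - 1) <= om / 4) by (rewrite <- Hdpp; apply Rle_Rpower_l; lra).
      assert (FU := Fnl_upper om p q (u r) Hp Hpq Y).
      assert (Z2 : u r ^ 2 * Rpower (u r) (p - 1) <= u r ^ 2 * (om / 4))
        by (apply Rmult_le_compat_l; [apply pow2_ge_0|exact Z]).
      assert (EEr := EE r ltac:(unfold R3 in *; lra)).
      assert (Eg := Ege r ltac:(unfold R3 in *; lra)). assert (El := Ele r ltac:(unfold R3 in *; lra)).
      assert (Fb := Fnl_bound om p q (u r) Hp Hpq Hom ltac:(lra)). apply abs_le_to in Fb.
      assert (u r ^ 2 <= 1) by nra.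
      assert ((om / 2 + 2) * u r ^ 2 <= om / 2 + 2) by nra.
      unfold D2. split; [split|]; lra. }
    set (k0 := sqrt (om / 2)).
    assert (Hk0 : 0 < k0) by (apply sqrt_lt_R0; lra).
    assert (Hk02 : k0 * k0 = om / 2) by (apply sqrt_sqrt; lra).
    assert (KU : forall r, R5 <= r -> k0 * u r ^ 2 <= - (u r * du r)).
    { intros r Hr. destruct (Bnd r Hr) as [[B1 B2] [B3 B4]].
      assert (X := UD r ltac:(lra)).
      assert (Hrm : 0 < r ^ m) by (apply pow_lt; unfold R3 in *; lra).
      assert (Pz : 0 < - (u r * du r)).
      { destruct (Rlt_dec 0 (- (u r * du r))) as [h|h]; [exact h|]. apply Rnot_lt_le in h.
        assert (0 <= (INR m - 1) * r ^ m) by (apply Rmult_le_pos; lra).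
        assert ((INR m - 1) * r ^ m * - (u r * du r) <= 0) by nra. lra. }
      destruct (Rle_dec (k0 * u r ^ 2) (- (u r * du r))) as [h|h]; [exact h|]. exfalso.
      apply Rnot_le_lt in h.
      assert (S1 : (u r * du r) ^ 2 < (k0 * u r ^ 2) ^ 2) by nra.
      assert (S2 : (k0 * u r ^ 2) ^ 2 = om / 2 * u r ^ 2 * u r ^ 2).
      { replace ((k0 * u r ^ 2) ^ 2) with ((k0 * k0) * u r ^ 2 * u r ^ 2) by ring. rewrite Hk02; ring. }
      assert (S3 : (u r * du r) ^ 2 = u r ^ 2 * du r ^ 2) by ring.
      assert (S4 : u r ^ 2 * (om / 2 * u r ^ 2) <= u r ^ 2 * du r ^ 2)
        by (apply Rmult_le_compat_l; [apply pow2_ge_0|exact B1]).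
      lra. }
    set (H := fun r => u r ^ 2 * exp (2 * k0 * r)).
    assert (Hmono : forall r, R5 <= r -> H r <= H R5).
    { intros r Hr. destruct (Req_dec r R5) as [->|hne]; [lra|].
      apply mono_dec with (g' := fun x => 2 * exp (2 * k0 * x) * (u x * du x + k0 * u x ^ 2)); [lra| |].
      - intros x Hx. unfold H. eapply dpl_eq.
        { apply (dpl_mult (fun r => u r ^ 2) (fun r => exp (2 * k0 * r))).
          - apply (dpl_comp u (fun y => y ^ 2)); [apply Hdu; unfold R3 in *; lra| apply dpl_pow].
          - apply (dpl_comp (fun r => 2 * k0 * r) exp); [|apply derivable_pt_lim_exp].
            apply (dpl_mult (fun _ => 2 * k0) (fun r => r)); [apply dpl_const| apply dpl_id]. }
        cbn [Init.Nat.pred]. change (INR 2) with (1 + 1). ring.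
      - intros x Hx. assert (X := KU x ltac:(lra)). assert (0 < exp (2 * k0 * x)) by apply exp_pos.
        nra. }
    set (H5 := H R5).
    set (K := (INR m - 1) ^ 2 * D2 * H5 / c ^ 2).
    assert (Hc2 : 0 < c ^ 2) by nra.
    destruct (exp_beats (2 * k0) (m * 2) K R5 ltac:(lra)) as [r [Hr1 [Hr2 Hr3]]].
    rewrite pow_mult in Hr3.
    destruct (Bnd r ltac:(lra)) as [[B1 B2] [B3 B4]].
    assert (X := UD r ltac:(lra)).
    assert (Y := Hmono r ltac:(lra)). unfold H in Y. fold H5 in Y.
    assert (Hrm : 0 < r ^ m) by (apply pow_lt; lra).
    assert (L1 : c ^ 2 <= ((INR m - 1) * r ^ m * - (u r * du r)) ^ 2) by nra.
    assert (L2 : ((INR m - 1) * r ^ m * - (u r * du r)) ^ 2 = ((INR m - 1) * r ^ m) ^ 2 * u r ^ 2 * du r ^ 2) by ring.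
    assert (A0 : 0 <= ((INR m - 1) * r ^ m) ^ 2) by apply pow2_ge_0.
    assert (L3 : ((INR m - 1) * r ^ m) ^ 2 * u r ^ 2 * du r ^ 2 <= ((INR m - 1) * r ^ m) ^ 2 * u r ^ 2 * D2).
    { apply Rmult_le_compat_l; [apply Rmult_le_pos; [exact A0| apply pow2_ge_0]| lra]. }
    assert (Ex : 0 < exp (2 * k0 * r)) by apply exp_pos.
    assert (L4 : c ^ 2 * exp (2 * k0 * r) <= ((INR m - 1) * r ^ m) ^ 2 * D2 * (u r ^ 2 * exp (2 * k0 * r))).
    { replace (((INR m - 1) * r ^ m) ^ 2 * D2 * (u r ^ 2 * exp (2 * k0 * r)))
        with (((INR m - 1) * r ^ m) ^ 2 * u r ^ 2 * D2 * exp (2 * k0 * r)) by ring.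
      apply Rmult_le_compat_r; lra. }
    assert (HD2 : 0 < D2) by (unfold D2; lra).
    assert (L5 : ((INR m - 1) * r ^ m) ^ 2 * D2 * (u r ^ 2 * exp (2 * k0 * r)) <= ((INR m - 1) * r ^ m) ^ 2 * D2 * H5).
    { apply Rmult_le_compat_l; [apply Rmult_le_pos; lra| exact Y]. }
    assert (L6 : c ^ 2 * (K * (r ^ m) ^ 2) = ((INR m - 1) * r ^ m) ^ 2 * D2 * H5).
    { unfold K. field. lra. }
    assert (L7 : c ^ 2 * (K * (r ^ m) ^ 2) < c ^ 2 * exp (2 * k0 * r)) by (apply Rmult_lt_compat_l; lra).
    lra.
Qed.
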